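(* In the three-agent investor/hedge-fund setting with restricted reports, fix the investor's report $\tilde m$ and let $\tilde\alpha=\tilde m/(2+\rho)$. Set $c=\frac{a\nu-\tilde\alpha(1-\nu)}{\nu(2-\nu)}$ and $s=\frac{\eta(1-\nu)}{\nu(2-\nu)}$. (i) Given fund 3's report $\tilde b$, the report $\tilde a$ maximizing fund 2's utility $g_2$ is uniquely $\tilde a^*=c+s\tilde b$. (ii) Symmetrically, given fund 2's report $\tilde a$, the report $\tilde b$ maximizing fund 3's utility $g_3$ is uniquely $\tilde b^*=c+s\tilde a$.
   Context: Three agents: agent 1 (investor), agents 2 and 3 (hedge funds). Parameters $m,a\in\mathbb{R}$ and $\rho\in(-1,1)$; true beliefs $M=\begin{pmatrix}0&a&a\\ m&0&0\\ m&0&0\end{pmatrix}$ (column $i$ is agent $i$'s true belief vector $\mu_i$), $\Sigma=\begin{pmatrix}1&0&0\\0&1&\rho\\0&\rho&1\end{pmatrix}$, $\Gamma=I_3$. Restricted reports: the investor reports a common value $\tilde m$ for $M'_{21}=M'_{31}$, fund 2 reports $M'_{12}=\tilde a$, fund 3 reports $M'_{13}=\tilde b$, and all other entries of $M'$ equal the true value $0$. The stable point for $M'$ is the unique $(W,P)$ with $W=W^T$, $P^T=-P$ and $M'-P=2\Sigma W\Gamma$. Agent $i$'s utility is $g_i=w_i^T(\mu_i-Pe_i)-w_i^T\Sigma w_i$, $w_i=We_i$. Define $\nu=\tfrac12\big(\tfrac1{2-\rho}+\tfrac1{2+\rho}\big)$ and $\eta=\tfrac12\big(\tfrac1{2-\rho}-\tfrac1{2+\rho}\big)$.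 *)

(* Defs.v *)
From HB Require Import structures.
From mathcomp Require Import all_boot all_order all_algebra.
Set Implicit Arguments. Unset Strict Implicit. Unset Printing Implicit Defensive.
Import Order.TTheory GRing.Theory Num.Theory.
Local Open Scope ring_scope.

Section Defs.
Variable R : realFieldType.

Definition mx3 (rows : seq (seq R)) : 'M[R]_3 :=
  \matrix_(i < 3, j < 3) nth 0 (nth [::] rows i) j.

Definition agent1 : 'I_3 := @Ordinal 3 0 isT.
Definition agent2 : 'I_3 := @Ordinal 3 1 isT.
Definition agent3 : 'I_3 := @Ordinal 3 2 isT.

(* true beliefs; column i = mu_i *)
Definition Mtrue (m a : R) : 'M[R]_3 :=
  mx3 [:: [:: 0; a; a]; [:: m; 0; 0]; [:: m; 0; 0]].

Definition Mrep (mt ta bt : R) : 'M[R]_3 :=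
  mx3 [:: [:: 0; ta; bt]; [:: mt; 0; 0]; [:: mt; 0; 0]].

Definition Sigma (rho : R) : 'M[R]_3 :=
  mx3 [:: [:: 1; 0; 0]; [:: 0; 1; rho]; [:: 0; rho; 1]].

Definition Gamma : 'M[R]_3 := 1%:M.

Definition stable (rho : R) (Mp W P : 'M[R]_3) : Prop :=
  W^T = W /\ P^T = - P /\ Mp - P = 2%:R *: (Sigma rho *m W *m Gamma).

Definition utility (rho : R) (M : 'M[R]_3) (i : 'I_3) (W P : 'M[R]_3) : R :=
  let w := col i W in
  ((w^T *m (col i M - col i P)) 0 0) - ((w^T *m Sigma rho *m w) 0 0).

Definition util_at (rho : R) (M Mp : 'M[R]_3) (i : 'I_3) (v : R) : Prop :=
  exists W P, stable rho Mp W P /\ utility rho M i W P = v.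

Definition unique_argmax (U : R -> R -> Prop) (x : R) : Prop :=
  (exists v, U x v) /\
  forall y v v', U y v -> U x v' -> v <= v' /\ (y <> x -> v < v').

Definition nu (rho : R) : R := (((2 - rho)^-1) + ((2 + rho)^-1)) / 2.
Definition eta (rho : R) : R := (((2 - rho)^-1) - ((2 + rho)^-1)) / 2.
Definition alphat (rho mt : R) : R := mt / (2 + rho).
Definition c_coef (rho a mt : R) : R :=
  (a * nu rho - alphat rho mt * (1 - nu rho)) / (nu rho * (2 - nu rho)).
Definition s_coef (rho : R) : R :=
  (eta rho * (1 - nu rho)) / (nu rho * (2 - nu rho)).
End Defs.

(* Main.v *)
Require Import Defs.
From HB Require Import structures.
From mathcomp Require Import all_boot all_order all_algebra.
From mathcomp Require Import ring lra.
Import Order.TTheory GRing.Theory Num.Theory.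
Local Open Scope ring_scope.
Set Implicit Arguments. Unset Strict Implicit.

Section S.
Variable R : realFieldType.

Lemma sum3 (F : 'I_3 -> R) : \sum_i F i = F agent1 + F agent2 + F agent3.
Proof.
rewrite !big_ord_recl big_ord0 addr0 addrA.
by congr (_ + _ + _); congr F; apply: val_inj.
Qed.

Variables (rho mt ta bt : R).

Definition DD := 2 * (4 - rho ^+ 2).
Definition w12 := (2 * (ta + mt) - rho * (bt + mt)) / DD.
Definition w13 := (2 * (bt + mt) - rho * (ta + mt)) / DD.
Definition Wsol : 'M[R]_3 := mx3 [:: [:: 0; w12; w13]; [:: w12; 0; 0]; [:: w13; 0; 0]].
Definition Psol : 'M[R]_3 := mx3 [:: [:: 0; ta - 2 * w12; bt - 2 * w13];
   [:: - (ta - 2 * w12); 0; 0]; [:: - (bt - 2 * w13); 0; 0]].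

Lemma DD0 : -1 < rho -> rho < 1 -> DD != 0.
Proof. move=> hr1 hr2. have h1 : 0 < (1 - rho) * (1 + rho) by apply: mulr_gt0; lra.
have h : 0 < DD by rewrite /DD expr2; nra. by rewrite gt_eqF. Qed.

Lemma ord3P (P : 'I_3 -> Prop) : P agent1 -> P agent2 -> P agent3 -> forall i, P i.
Proof.
move=> h1 h2 h3 [[|[|[|i]]] hi] //.
- by rewrite (_ : Ordinal hi = agent1) //; apply: val_inj.
- by rewrite (_ : Ordinal hi = agent2) //; apply: val_inj.
- by rewrite (_ : Ordinal hi = agent3) //; apply: val_inj.
Qed.

Lemma stable_sol : -1 < rho -> rho < 1 -> stable rho (Mrep mt ta bt) Wsol Psol.
Proof.
move=> hr1 hr2; have D0 := DD0 hr1 hr2.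
have h4 : 4 - rho ^+ 2 != 0 by move: D0; rewrite /DD mulf_eq0 negb_or => /andP[].
rewrite /stable /Gamma mulmx1; split; [|split]; apply/matrixP;
  apply: ord3P => /=; apply: ord3P => /=;
  rewrite /Mrep /Wsol /Psol /Sigma /mx3 !mxE ?sum3 ?mxE /=;
  by rewrite /w12 /w13 /DD; field.
Qed.
End S.
Section U.
Variable R : realFieldType.
Lemma stable_uniq (rho mt ta bt : R) (W P : 'M[R]_3) : -1 < rho -> rho < 1 ->
  stable rho (Mrep mt ta bt) W P -> W = Wsol rho mt ta bt /\ P = Psol rho mt ta bt.
Proof.
move=> hr1 hr2 [hW [hP hE]]; have D0 := DD0 hr1 hr2.
have h4 : 4 - rho ^+ 2 != 0 by move: D0; rewrite /DD mulf_eq0 negb_or => /andP[].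
rewrite /Gamma mulmx1 in hE.
have eW i j : W i j = W j i by have := congr1 (fun A : 'M[R]_3 => A j i) hW; rewrite mxE.
have eP i j : P j i = - P i j by have := congr1 (fun A : 'M[R]_3 => A i j) hP; rewrite !mxE.
have eE i j := congr1 (fun A : 'M[R]_3 => A i j) hE.
have E11 := eE agent1 agent1. have E12 := eE agent1 agent2. have E13 := eE agent1 agent3.
have E21 := eE agent2 agent1. have E22 := eE agent2 agent2. have E23 := eE agent2 agent3.
have E31 := eE agent3 agent1. have E32 := eE agent3 agent2. have E33 := eE agent3 agent3.
move: E11 E12 E13 E21 E22 E23 E31 E32 E33; rewrite /Mrep /Sigma /mx3 !mxE !sum3 !mxE /=.
rewrite !(eW agent2 agent1) !(eW agent3 agent1) !(eW agent3 agent2).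
rewrite !(eP agent1 agent2) !(eP agent1 agent3) !(eP agent2 agent3).
have p11 : P agent1 agent1 = 0 by have := eP agent1 agent1; lra.
have p22 : P agent2 agent2 = 0 by have := eP agent2 agent2; lra.
have p33 : P agent3 agent3 = 0 by have := eP agent3 agent3; lra.
rewrite p11 p22 p33 !mul1r !mul0r !add0r !addr0.
move=> E11 E12 E13 E21 E22 E23 E31 E32 E33.
have w11 : W agent1 agent1 = 0 by lra.
have hX : ta + mt = 4 * W agent1 agent2 + 2 * (rho * W agent1 agent3) by lra.
have hY : bt + mt = 2 * (rho * W agent1 agent2) + 4 * W agent1 agent3 by lra.
have w12e : W agent1 agent2 = w12 rho mt ta bt.
  by rewrite /w12 hX hY /DD; field.
have w13e : W agent1 agent3 = w13 rho mt ta bt.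
  by rewrite /w13 hX hY /DD; field.
have w22e : W agent2 agent2 = - (rho * W agent2 agent3) by lra.
have w33e : W agent3 agent3 = - (rho * W agent2 agent3) by lra.
rewrite opprK in E32.
rewrite E32 w22e w33e in E23.
have h1 : (1 - rho ^+ 2) * W agent2 agent3 = 0.
  have : 4 * ((1 - rho ^+ 2) * W agent2 agent3) = 0 by lra.
  by move/eqP; rewrite mulf_eq0 (_ : (4 : R) == 0 = false) ?orFb => [/eqP|] //; lra.
have w23 : W agent2 agent3 = 0.
  move/eqP: h1; rewrite mulf_eq0 => /orP[|/eqP //].
  by move=> /eqP h; exfalso; nra.
rewrite w23 mulr0 oppr0 in w22e w33e.
have p23 : P agent2 agent3 = 0 by rewrite E32 w22e w23 mulr0 addr0 mulr0.
have p12 : P agent1 agent2 = ta - 2 * w12 rho mt ta bt by rewrite -w12e; lra.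
have p13 : P agent1 agent3 = bt - 2 * w13 rho mt ta bt by rewrite -w13e; lra.
split; apply/matrixP; apply: ord3P; apply: ord3P;
  rewrite /Wsol /Psol /mx3 !mxE /=;
  rewrite ?(eW agent2 agent1) ?(eW agent3 agent1) ?(eW agent3 agent2)
     ?(eP agent1 agent2) ?(eP agent1 agent3) ?(eP agent2 agent3) //.
all: try by rewrite ?w11 ?w12e ?w13e ?w22e ?w33e ?w23 ?p11 ?p12 ?p13 ?p22 ?p33 ?p23 ?oppr0.
Qed.
End U.

Section V.
Variable R : realFieldType.
Lemma util2 (rho m a mt ta bt : R) :
  utility rho (Mtrue m a) agent2 (Wsol rho mt ta bt) (Psol rho mt ta bt) =
  w12 rho mt ta bt * (a - ta) + w12 rho mt ta bt ^+ 2.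
Proof.
rewrite /utility /Mtrue /Wsol /Psol /Sigma /mx3 !mxE !sum3 !mxE /=.
rewrite ?mxE ?sum3 ?mxE /=. ring.
Qed.
Lemma util3 (rho m a mt ta bt : R) :
  utility rho (Mtrue m a) agent3 (Wsol rho mt ta bt) (Psol rho mt ta bt) =
  w13 rho mt ta bt * (a - bt) + w13 rho mt ta bt ^+ 2.
Proof.
rewrite /utility /Mtrue /Wsol /Psol /Sigma /mx3 !mxE !sum3 !mxE /=.
rewrite ?mxE ?sum3 ?mxE /=. ring.
Qed.
End V.
Section W.
Variable R : realFieldType.
Definition xs (rho a mt bt : R) :=
  (2 * a * (4 - rho ^+ 2) - mt * (2 - rho ^+ 2) * (2 - rho) + rho * (2 - rho ^+ 2) * bt)
   / (4 * (3 - rho ^+ 2)).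
Lemma xs_eq (rho a mt bt : R) : -1 < rho -> rho < 1 ->
  c_coef rho a mt + s_coef rho * bt = xs rho a mt bt.
Proof.
move=> h1 h2.
have a1 : 2 - rho != 0 by rewrite gt_eqF //; lra.
have a2 : 2 + rho != 0 by rewrite gt_eqF //; lra.
have a3 : 4 - rho ^+ 2 != 0 by rewrite gt_eqF // expr2; nra.
have a4 : 3 - rho ^+ 2 != 0 by rewrite gt_eqF // expr2; nra.
have a5 : 2 - rho ^+ 2 != 0 by rewrite gt_eqF // expr2; nra.
have hnu : nu rho = 2 / (4 - rho ^+ 2) by rewrite /nu; field; rewrite ?a1 ?a2 ?a3.
have het : Defs.eta rho = rho / (4 - rho ^+ 2) by rewrite /Defs.eta; field; rewrite ?a1 ?a2 ?a3.
have a6 : 2 * (4 - rho ^+ 2) - 2 != 0 by rewrite gt_eqF // expr2; nra.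
by rewrite /c_coef /s_coef /alphat hnu het /xs; field; rewrite ?a1 ?a2 ?a3 ?a4 ?a6.
Qed.

Lemma key2 (rho a mt bt y : R) : -1 < rho -> rho < 1 ->
  let g := fun y => w12 rho mt y bt * (a - y) + w12 rho mt y bt ^+ 2 in
  g y = g (xs rho a mt bt) - 4 * (3 - rho ^+ 2) / (DD rho) ^+ 2 * (y - xs rho a mt bt) ^+ 2.
Proof.
move=> h1 h2 g.
have a1 : 2 - rho != 0 by rewrite gt_eqF //; lra.
have a2 : 2 + rho != 0 by rewrite gt_eqF //; lra.
have a3 : 4 - rho ^+ 2 != 0 by rewrite gt_eqF // expr2; nra.
have a4 : 3 - rho ^+ 2 != 0 by rewrite gt_eqF // expr2; nra.
by rewrite /g /w12 /xs /DD; field; rewrite ?a1 ?a2 ?a3 ?a4.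
Qed.

Lemma kpos (rho : R) : -1 < rho -> rho < 1 -> 0 < 4 * (3 - rho ^+ 2) / (DD rho) ^+ 2.
Proof.
move=> h1 h2; apply: divr_gt0.
  by apply: mulr_gt0; [lra| rewrite subr_gt0 expr2; nra].
by rewrite exprn_even_gt0 //= DD0.
Qed.

Lemma argmax_of (rho x gx : R) (g : R -> R) : -1 < rho -> rho < 1 ->
  (forall y, g y = gx - 4 * (3 - rho ^+ 2) / (DD rho) ^+ 2 * (y - x) ^+ 2) ->
  forall y, g y <= g x /\ (y <> x -> g y < g x).
Proof.
move=> h1 h2 hg y; rewrite !hg subrr expr0n /= mulr0 subr0.
have hk := kpos h1 h2; split.
  by rewrite lerBlDr lerDl; apply: mulr_ge0; [exact: ltW | exact: sqr_ge0].
move=> hyx; rewrite ltrBlDr ltrDl; apply: mulr_gt0 => //.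
by rewrite exprn_even_gt0 //= subr_eq0; apply/eqP.
Qed.

End W.

Theorem mainTheorem12 (R : realFieldType) (m a rho mt : R)
  (hrho1 : -1 < rho) (hrho2 : rho < 1) :
  (forall bt : R,
     unique_argmax
       (fun ta v => util_at rho (Mtrue m a) (Mrep mt ta bt) agent2 v)
       (c_coef rho a mt + s_coef rho * bt)) /\
  (forall ta : R,
     unique_argmax
       (fun bt v => util_at rho (Mtrue m a) (Mrep mt ta bt) agent3 v)
       (c_coef rho a mt + s_coef rho * ta)).
Proof.
split.
- move=> bt; rewrite xs_eq //; split.
    by exists (utility rho (Mtrue m a) agent2 (Wsol rho mt (xs rho a mt bt) bt)
                  (Psol rho mt (xs rho a mt bt) bt));
       exists (Wsol rho mt (xs rho a mt bt) bt), (Psol rho mt (xs rho a mt bt) bt);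
       split => //; exact: stable_sol.
  move=> y v v' [W [P [hs <-]]] [W' [P' [hs' <-]]].
  case: (stable_uniq hrho1 hrho2 hs) => -> ->.
  case: (stable_uniq hrho1 hrho2 hs') => -> ->.
  rewrite !util2.
  pose g := fun y => w12 rho mt y bt * (a - y) + w12 rho mt y bt ^+ 2.
  exact: (@argmax_of R rho (xs rho a mt bt) (g (xs rho a mt bt)) g hrho1 hrho2
            (fun y => @key2 R rho a mt bt y hrho1 hrho2) y).
- move=> ta; rewrite xs_eq //; split.
    by exists (utility rho (Mtrue m a) agent3 (Wsol rho mt ta (xs rho a mt ta))
                  (Psol rho mt ta (xs rho a mt ta)));
       exists (Wsol rho mt ta (xs rho a mt ta)), (Psol rho mt ta (xs rho a mt ta));
       split => //; exact: stable_sol.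
  move=> y v v' [W [P [hs <-]]] [W' [P' [hs' <-]]].
  case: (stable_uniq hrho1 hrho2 hs) => -> ->.
  case: (stable_uniq hrho1 hrho2 hs') => -> ->.
  rewrite !util3.
  pose g := fun y => w12 rho mt y ta * (a - y) + w12 rho mt y ta ^+ 2.
  exact: (@argmax_of R rho (xs rho a mt ta) (g (xs rho a mt ta)) g hrho1 hrho2
            (fun y => @key2 R rho a mt ta y hrho1 hrho2) y).
Qed.
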